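(* Let $\mathcal{G}$ be a finite tree and let $(v_0,v_1,\dots,v_N)$ be the unique path from $v_0$ to $v_N$, $N\ge 1$. Then the access times of the begrudgingly backtracking random walk satisfy $$\tilde{\mathtt{t}}(v_0,v_N)=\tilde{\mathtt{t}}(v_0,v_1)+\sum_{n=1}^{N-1}\Bigl(\tilde{\mathtt{t}}(v_{n-1}\to v_n,v_{n+1})-1\Bigr).$$
   Context: Begrudgingly backtracking random walk (BBRW): $x_1$ is uniform on the neighbors of $x_0$; for $n\ge0$, given $x_n=i,x_{n+1}=j$, $x_{n+2}$ is uniform on $\mathcal{N}(j)\setminus\{i\}$ if this set is nonempty, and $x_{n+2}=i$ otherwise. For a node $k$, $T_k=\min\{n\ge0:x_n=k\}$. Access times of BBRW: $\tilde{\mathtt{t}}(i,k)=\mathbb{E}[T_k\mid x_0=i]$ and $\tilde{\mathtt{t}}(i\to j,k)=\mathbb{E}[T_k\mid x_0=i,\ x_1=j]$ for $j$ adjacent to $i$. *)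

(* Defs.v *)
From HB Require Import structures.
From mathcomp Require Import all_boot all_order all_algebra.
From mathcomp Require Import boolp classical_sets reals constructive_ereal ereal.
From mathcomp Require Import topology normedtype sequences.
Set Implicit Arguments. Unset Strict Implicit. Unset Printing Implicit Defensive.
Import Order.TTheory GRing.Theory Num.Theory.
Local Open Scope ring_scope.

Section BBRW.
Variables (T : finType) (e : rel T).

Definition simple_graph := irreflexive e /\ symmetric e.
Definition connected_graph := forall x y : T, connect e x y.
(* No cycle x, p_1, ..., p_k, x with k >= 2 (i.e. at least 3 distinct vertices). *)
Definition acyclic_graph := forall (x : T) (p : seq T),
  (2 <= size p)%N -> path e x p -> uniq (x :: p) -> ~~ e (last x p) x.
Definition is_tree := [/\ simple_graph, connected_graph & acyclic_graph].

Definition nbhd (j : T) : {set T} := [set x | e j x].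

Variable R : realType.

(* P(x_1 = j | x_0 = i): uniform on N(i). *)
Definition step1 (i j : T) : R := if e i j then (#|nbhd i|%:R)^-1 else 0.

(* P(x_{n+2} = k | x_n = i, x_{n+1} = j). *)
Definition step2 (i j k : T) : R :=
  let S := nbhd j :\ i in
  if S == finset.set0 then (k == i)%:R
  else if k \in S then (#|S|%:R)^-1 else 0.

Fixpoint wt (s : seq T) : R :=
  match s with
  | a :: ((b :: (c :: _)) as t) => step2 a b c * wt t
  | _ => 1
  end.

(* P(T_k > n | x_0 = i, x_1 = j) = P(x_0,...,x_n all differ from k | ...). *)
Definition tail2 (i j k : T) (n : nat) : R :=
  if n is n'.+1 then
    \sum_(w : n'.-tuple T) wt [:: i, j & tval w] * (all (fun x => x != k) [:: i, j & tval w])%:R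
  else (i != k)%:R.

(* P(T_k > n | x_0 = i). *)
Definition tail1 (i k : T) (n : nat) : R :=
  if n is n'.+1 then
    \sum_(j : T) \sum_(w : n'.-tuple T)
      step1 i j * wt [:: i, j & tval w] * (all (fun x => x != k) [:: i, j & tval w])%:R
  else (i != k)%:R.

(* Access times, E[T_k | ...] = sum_{n >= 0} P(T_k > n), in the extended reals. *)
Definition access (i k : T) : \bar R := (\sum_(0 <= n <oo) (tail1 i k n)%:E)%E.
Definition access2 (i j k : T) : \bar R := (\sum_(0 <= n <oo) (tail2 i j k n)%:E)%E.

End BBRW.

(* Main.v *)
Require Import Defs.
From HB Require Import structures.
From mathcomp Require Import all_boot all_order all_algebra.
From mathcomp Require Import boolp classical_sets reals constructive_ereal ereal.
From mathcomp Require Import topology normedtype sequences.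
From mathcomp Require Import lra zify.
From Stdlib Require Import Lia.
Set Implicit Arguments. Unset Strict Implicit. Unset Printing Implicit Defensive.
Import Order.TTheory GRing.Theory Num.Theory.
Local Open Scope ring_scope.

Section Basic.
Variables (T : finType) (e : rel T) (R : realType).

Lemma sum_tuple0 (F : seq T -> R) : \sum_(w : 0.-tuple T) F w = F [::].
Proof. by rewrite (big_pred1 [tuple]) // => w; apply/esym/eqP; exact: tuple0. Qed.

Lemma sum_tuple_cons n (F : seq T -> R) :
  \sum_(w : n.+1.-tuple T) F w = \sum_(d : T) \sum_(w : n.-tuple T) F (d :: w).
Proof.
rewrite pair_big /=.
rewrite (reindex (fun p : T * n.-tuple T => [tuple of p.1 :: p.2])) //=.
exists (fun t : n.+1.-tuple T => (thead t, [tuple of behead t])).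
  by move=> [d w] _ /=; congr pair; apply: val_inj.
by move=> t _; apply: val_inj => /=; rewrite [in RHS](tuple_eta t).
Qed.

Lemma step1_ge0 i j : 0 <= step1 e R i j.
Proof. by rewrite /step1; case: ifP => _ //; rewrite invr_ge0 ler0n. Qed.

Lemma step2_ge0 a b d : 0 <= step2 e R a b d.
Proof.
rewrite /step2; case: ifP => _; first by rewrite ler0n.
by case: ifP => _ //; rewrite invr_ge0 ler0n.
Qed.

Lemma step2_sum a b : \sum_d step2 e R a b d = 1.
Proof.
case H: (nbhd e b :\ a == finset.set0).
  rewrite (eq_bigr (fun d => (d == a)%:R)); last by move=> d _; rewrite /step2 /= H.
  by rewrite (bigD1 a) //= eqxx big1 ?addr0 // => d /negbTE ->.
have S0 : nbhd e b :\ a != finset.set0 by rewrite H.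
transitivity (\sum_(d in nbhd e b :\ a) (#|nbhd e b :\ a|%:R : R)^-1).
  by rewrite [RHS]big_mkcond; apply: eq_bigr => d _; rewrite /step2 /= H.
rewrite sumr_const -[_ *+ _]mulr_natl mulfV //.
rewrite pnatr_eq0 -lt0n card_gt0; exact: S0.
Qed.

Lemma step1_sum i : nbhd e i != finset.set0 -> \sum_j step1 e R i j = 1.
Proof.
move=> S0; rewrite /step1.
transitivity (\sum_(j in nbhd e i) (#|nbhd e i|%:R : R)^-1).
  by rewrite [RHS]big_mkcond; apply: eq_bigr => j _; rewrite inE.
rewrite sumr_const -[_ *+ _]mulr_natl mulfV //.
by rewrite pnatr_eq0 -lt0n card_gt0.
Qed.

Lemma wt_ge0 s : 0 <= wt e R s.
Proof.
elim: s => [|a s IH] //=; case: s IH => [|b s] //= IH; case: s IH => [|c s] //= IH.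
by rewrite mulr_ge0 // step2_ge0.
Qed.

Lemma natr_and (b1 b2 : bool) : ((b1 && b2)%:R : R) = b1%:R * b2%:R.
Proof. by case: b1; case: b2; rewrite /= ?mul1r ?mul0r. Qed.

Lemma wt_cons3 a b c s : wt e R [:: a, b, c & s] = step2 e R a b c * wt e R [:: b, c & s].
Proof. by []. Qed.

Lemma tail2S a b k m : tail2 e R a b k m.+1 =
  (a != k)%:R * \sum_d step2 e R a b d * tail2 e R b d k m.
Proof.
case: m => [|m].
  rewrite /tail2 (sum_tuple0 (fun w => wt e R [:: a, b & w] * (all (fun x => x != k) [:: a, b & w])%:R)).
  rewrite /= -mulr_suml /= step2_sum mul1r andbT natr_and.
  by rewrite mul1r.
rewrite /tail2 (sum_tuple_cons _ (fun w => wt e R [:: a, b & w] * (all (fun x => x != k) [:: a, b & w])%:R)).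
rewrite mulr_sumr; apply: eq_bigr => d _.

rewrite mulrCA !mulr_sumr; apply: eq_bigr => w _.
rewrite wt_cons3 (_ : all _ [:: a, b, d & tval w] = (a != k) && all (fun x => x != k) [:: b, d & tval w]) //.
by rewrite natr_and; case: (a != k); rewrite ?mul1r ?mul0r ?mulr0 // mulrA.
Qed.

Lemma tail2_ge0 a b k m : 0 <= tail2 e R a b k m.
Proof.
elim: m a b => [|m IH] a b; first by rewrite /= ler0n.
rewrite tail2S mulr_ge0 ?ler0n // sumr_ge0 // => d _.
by rewrite mulr_ge0 ?step2_ge0.
Qed.

Lemma tail2_mono a b k m : tail2 e R a b k m.+1 <= tail2 e R a b k m.
Proof.
elim: m a b => [|m IH] a b.
  rewrite tail2S [X in _ <= X](_ : _ = (a != k)%:R * \sum_d step2 e R a b d * 1); last first.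
    by rewrite -mulr_suml step2_sum !mulr1.
  rewrite ler_wpM2l ?ler0n // ler_sum // => d _.
  by rewrite ler_wpM2l ?step2_ge0 //=; case: (b != k); rewrite /= ?ler01 ?ler0n ?lexx.
rewrite (tail2S _ _ _ m.+1) (tail2S _ _ _ m) ler_wpM2l ?ler0n // ler_sum // => d _.
by rewrite ler_wpM2l ?step2_ge0.
Qed.

Lemma tail2_kk0 d k m : tail2 e R k d k m = 0.
Proof. by case: m => [|m]; rewrite ?tail2S /= eqxx ?mul0r. Qed.

Lemma tail2_kk a k m : tail2 e R a k k m.+1 = 0.
Proof. by rewrite tail2S big1 ?mulr0 // => d _; rewrite tail2_kk0 mulr0. Qed.

Lemma tail1_mix i k m : nbhd e i != finset.set0 ->
  tail1 e R i k m = \sum_j step1 e R i j * tail2 e R i j k m.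
Proof.
move=> Ni; case: m => [|m].
  by rewrite /= -mulr_suml step1_sum // mul1r.
rewrite /tail1 /tail2; apply: eq_bigr => j _.
by rewrite mulr_sumr; apply: eq_bigr => w _; rewrite mulrA.
Qed.

Lemma tail1_ge0 i k m : nbhd e i != finset.set0 -> 0 <= tail1 e R i k m.
Proof.
move=> Ni; rewrite tail1_mix // sumr_ge0 // => j _.
by rewrite mulr_ge0 ?step1_ge0 ?tail2_ge0.
Qed.

Lemma tail1_mono i k m : nbhd e i != finset.set0 ->
  tail1 e R i k m.+1 <= tail1 e R i k m.
Proof.
move=> Ni; rewrite !tail1_mix // ler_sum // => j _.
by rewrite ler_wpM2l ?step1_ge0 ?tail2_mono.
Qed.

Hypothesis esym : symmetric e.

Lemma step2_edge a b d : step2 e R a b d != 0 -> e a b -> e b d.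
Proof.
rewrite /step2 /=; case: ifP => _.
  case H: (d == a); last by rewrite eqxx.
  by move/eqP: H => -> _; rewrite esym.
by case: ifP => [|_]; [rewrite !inE => /andP[_ ->] | rewrite eqxx].
Qed.

Lemma step1_edge i j : step1 e R i j != 0 -> e i j.
Proof. by rewrite /step1; case: ifP => //; rewrite eqxx. Qed.

Section Region.
Variables (p c k : T) (C0 : pred T).
Hypothesis H1 : forall x, C0 x -> x != k.
Hypothesis H2 : forall x, C0 x -> x != c.
Hypothesis H3 : forall x y, C0 x -> e x y -> y != c -> C0 y.
Hypothesis H4 : forall x, C0 x -> e x c -> x = p.

Lemma region_tail2 m : forall a b, C0 a -> C0 b || (b == c) -> e a b ->
  tail2 e R a b k m = tail2 e R a b c m +
    \sum_(t < m) (tail2 e R a b c t - tail2 e R a b c t.+1) * tail2 e R p c k (m - t).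
Proof.
elim: m => [|m IH] a b Ca Cb eab.
  by rewrite /= (H1 Ca) (H2 Ca) big_ord0 addr0.
have [bc|bc] := eqVneq b c.
  subst b; have ap := H4 Ca eab; subst a.
  rewrite (tail2_kk p c m) add0r big_ord_recl (tail2_kk p c 0).
  have -> : tail2 e R p c c (@nat_of_ord m.+1 ord0) = 1 by rewrite /= (H2 Ca).
  have -> : (m.+1 - @nat_of_ord m.+1 ord0)%N = m.+1 by [].
  rewrite subr0 mul1r.
  rewrite big1 ?addr0 // => i _.
  by rewrite !tail2_kk subrr mul0r.
have {}Cb : C0 b by move: Cb; rewrite (negbTE bc) orbF.
rewrite tail2S (H1 Ca) mul1r.
rewrite (eq_bigr (fun d => step2 e R a b d * (tail2 e R b d c m +
    \sum_(t < m) (tail2 e R b d c t - tail2 e R b d c t.+1) * tail2 e R p c k (m - t)))); last first.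
  move=> d _; have [->|s0] := eqVneq (step2 e R a b d) 0; first by rewrite !mul0r.
  have ebd := step2_edge s0 eab.
  congr (_ * _); apply: IH => //.
  by have [->|dc] := eqVneq d c; rewrite ?eqxx ?orbT // (H3 Cb ebd dc).
under eq_bigr do rewrite mulrDr.
rewrite big_split.
have -> : \sum_d step2 e R a b d * tail2 e R b d c m = tail2 e R a b c m.+1.
  by rewrite tail2S (H2 Ca) mul1r.
congr (_ + _).
rewrite big_ord_recl.
have -> : tail2 e R a b c (@nat_of_ord m.+1 ord0).+1 = 1.
  by rewrite tail2S -mulr_suml step2_sum /= (H2 Ca) (H2 Cb) !mul1r.
have -> : tail2 e R a b c (@nat_of_ord m.+1 ord0) = 1 by rewrite /= (H2 Ca).
rewrite subrr mul0r add0r.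
under eq_bigr do rewrite mulr_sumr.
rewrite exchange_big; apply: eq_bigr => t _.
rewrite !lift0 subSS !(tail2S _ _ _ t.+1) !(tail2S _ _ _ t) (H2 Ca) !mul1r.
rewrite -sumrB mulr_suml; apply: eq_bigr => d _.
by rewrite mulrA mulrBr.
Qed.

Lemma region_tail1 i m : C0 i -> nbhd e i != finset.set0 ->
  tail1 e R i k m = tail1 e R i c m +
    \sum_(t < m) (tail1 e R i c t - tail1 e R i c t.+1) * tail2 e R p c k (m - t).
Proof.
move=> Ci Ni.
rewrite (tail1_mix k m Ni) (tail1_mix c m Ni).
rewrite (eq_bigr (fun j => step1 e R i j * (tail2 e R i j c m +
    \sum_(t < m) (tail2 e R i j c t - tail2 e R i j c t.+1) * tail2 e R p c k (m - t)))); last first.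
  move=> j _; have [->|s0] := eqVneq (step1 e R i j) 0; first by rewrite !mul0r.
  have eij := step1_edge s0.
  congr (_ * _); apply: region_tail2 => //.
  by have [->|jc] := eqVneq j c; rewrite ?eqxx ?orbT // (H3 Ci eij jc).
under eq_bigr do rewrite mulrDr.
rewrite big_split; congr (_ + _).
under eq_bigr do rewrite mulr_sumr.
rewrite exchange_big; apply: eq_bigr => t _.
rewrite (tail1_mix c t Ni) (tail1_mix c t.+1 Ni).
rewrite -sumrB mulr_suml; apply: eq_bigr => j _.
by rewrite mulrA mulrBr.
Qed.

End Region.

End Basic.

Section Conv.
Variable R : realType.
Variables (u g : nat -> R).
Hypothesis u0 : u 0%N = 1.
Hypothesis u_ge0 : forall n, 0 <= u n.
Hypothesis u_mono : forall n, u n.+1 <= u n.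
Hypothesis g_ge0 : forall n, 0 <= g n.

Let F t := u t - u t.+1.
Let W m := \sum_(t < m) F t * g (m - t)%N.
Let Hs n := \sum_(j < n) g j.+1.

Lemma F_ge0 t : 0 <= F t. Proof. by rewrite /F subr_ge0. Qed.

Lemma W_ge0 m : 0 <= W m.
Proof. by rewrite /W sumr_ge0 // => t _; rewrite mulr_ge0 ?F_ge0. Qed.

Lemma Hs_ge0 n : 0 <= Hs n.
Proof. by rewrite /Hs sumr_ge0. Qed.

Lemma Hs_S n : Hs n.+1 = Hs n + g n.+1.
Proof. by rewrite /Hs big_ord_recr. Qed.

Lemma Hs_mono a b : (a <= b)%N -> Hs a <= Hs b.
Proof.
move=> /subnK <-; elim: (b - a)%N => [|d IH]; first by rewrite add0n.
by rewrite addSn Hs_S (le_trans IH) // lerDl.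
Qed.

Lemma u_anti a b : (a <= b)%N -> u b <= u a.
Proof.
move=> /subnK <-; elim: (b - a)%N => [|d IH]; first by rewrite add0n.
by rewrite addSn (le_trans (u_mono _)).
Qed.

Lemma F_tele M : \sum_(t < M) F t = 1 - u M.
Proof.
elim: M => [|M IH]; first by rewrite big_ord0 u0 subrr.
by rewrite big_ord_recr /= IH /F addrA subrK.
Qed.

Lemma PW M : \sum_(m < M) W m = \sum_(t < M) F t * Hs (M - t.+1)%N.
Proof.
elim: M => [|M IH]; first by rewrite !big_ord0.
have H0 : Hs 0 = 0 by rewrite /Hs big_ord0.
rewrite big_ord_recr /= IH big_ord_recr /= subnn H0 mulr0 addr0.
rewrite /W -big_split /=; apply: eq_bigr => t _.
have tM := ltn_ord t.
rewrite -mulrDr; congr (_ * _).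
by rewrite subSS -(subnSK tM) Hs_S.
Qed.

Lemma PW_le M : \sum_(m < M) W m <= Hs M.
Proof.
rewrite PW (@le_trans _ _ (\sum_(t < M) F t * Hs M)) //.
  by apply: ler_sum => t _; rewrite ler_wpM2l ?F_ge0 // Hs_mono // leq_subr.
rewrite -mulr_suml F_tele.
have := u_ge0 M; have := Hs_ge0 M; nra.
Qed.

Lemma PW_ge K L : (1 - u K) * Hs L <= \sum_(m < K + L.+1) W m.
Proof.
rewrite PW big_split_ord /=.
rewrite (@le_trans _ _ (\sum_(t < K) F t * Hs L)) //.
  by rewrite -mulr_suml F_tele.
rewrite -[X in X <= _]addr0 lerD //.
  apply: ler_sum => t _; rewrite ler_wpM2l ?F_ge0 // Hs_mono //.
  have := ltn_ord t; lia.
by rewrite sumr_ge0 // => t _; rewrite mulr_ge0 ?F_ge0 ?Hs_ge0.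
Qed.

Lemma partial_le (f : nat -> R) M : (forall n, 0 <= f n) ->
  ((\sum_(m < M) f m)%:E <= \sum_(0 <= m <oo) (f m)%:E)%E.
Proof.
move=> f0; rewrite -sumEFin -(big_mkord xpredT (fun m => (f m)%:E)).
by apply: nneseries_lim_ge => n _ _; rewrite lee_fin.
Qed.

Lemma series_le (f : nat -> R) (x : \bar R) : (forall n, 0 <= f n) ->
  (forall M, (\sum_(m < M) f m)%:E <= x)%E ->
  (\sum_(0 <= m <oo) (f m)%:E <= x)%E.
Proof.
move=> f0 H; apply: lime_le.
  by apply: is_cvg_nneseries => n _ _; rewrite lee_fin.
by apply: nearW => M; rewrite big_mkord sumEFin.
Qed.

Lemma conv_series :
  (\sum_(0 <= m <oo) ((u m + W m)%:E) =
   \sum_(0 <= m <oo) (u m)%:E + \sum_(0 <= j <oo) (g j.+1)%:E)%E.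
Proof.
rewrite (eq_eseriesr (fun m _ => EFinD (u m) (W m))).
rewrite nneseriesD; last 2 first.
- by move=> i _ _; rewrite lee_fin.
- by move=> i _ _; rewrite lee_fin W_ge0.
have SW0 : (0 <= \sum_(0 <= m <oo) (W m)%:E)%E.
  by apply: nneseries_ge0 => n _ _; rewrite lee_fin W_ge0.
have Sg0 : (0 <= \sum_(0 <= m <oo) (g m.+1)%:E)%E.
  by apply: nneseries_ge0 => n _ _; rewrite lee_fin.
have Su0 : (0 <= \sum_(0 <= m <oo) (u m)%:E)%E.
  by apply: nneseries_ge0 => n _ _; rewrite lee_fin.
case ESu : (\sum_(0 <= m <oo) (u m)%:E)%E Su0 => [s| |] // s0.
  2: by rewrite !addye //; [move: Sg0 | move: SW0]; case: (\sum_(0 <= _ <oo) _)%E.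
congr (_ + _)%E.
have Pu M : \sum_(m < M) u m <= s.
  by rewrite -lee_fin -ESu; apply: partial_le.
apply/eqP; rewrite eq_le; apply/andP; split.
  apply: series_le => [n|M]; first exact: W_ge0.
  rewrite (le_trans _ (partial_le M (fun n => g_ge0 n.+1))) // lee_fin.
  exact: PW_le.
apply: series_le => [n|L]; first exact: g_ge0.
case ESW : (\sum_(0 <= m <oo) (W m)%:E)%E SW0 => [x| |] // x0; last exact: leey.
have PWx M : \sum_(m < M) W m <= x.
  by rewrite -lee_fin -ESW; apply: partial_le => n; exact: W_ge0.
rewrite lee_fin -/(Hs L) leNgt; apply/negP => xH.
set H := Hs L.
have H0 : 0 <= H by exact: Hs_ge0.
have d0 : 0 < H - x by rewrite subr_gt0.
have s0' : 0 <= s by have := Pu 1%N; rewrite big_ord1 => /(le_trans (u_ge0 0)).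
have [K h2] : exists K : nat, s * H / (H - x) < K%:R.
  by eexists; apply: archi_boundP; apply: divr_ge0; [exact: mulr_ge0 | exact: ltW].
have h2' : s * H < K%:R * (H - x) by rewrite -ltr_pdivrMr.
have h1 : (K.+1)%:R * u K <= s.
  apply: le_trans (Pu K.+1).
  have -> : (K.+1)%:R * u K = \sum_(t < K.+1) u K by rewrite sumr_const card_ord mulr_natl.
  apply: ler_sum => t _; apply: u_anti; have := ltn_ord t; lia.
have h3 : (1 - u K) * H <= x := le_trans (PW_ge K L) (PWx _).
have k1 : (K.+1)%:R = K%:R + 1 :> R by rewrite -natr1.
have uK0 := u_ge0 K.
have kp : 0 <= K%:R :> R by rewrite ler0n.
rewrite k1 in h1.
clear -h1 h2' h3 uK0 kp H0 d0 s0'.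
move: h1 h2' h3 uK0 kp H0 d0 s0'; rewrite /H; move: (Hs L) (u K) (K%:R : R) => a b c.
move=> *; nra.
Qed.

End Conv.

Lemma conv_series' (R : realType) (u g : nat -> R) :
  u 0%N = 1 -> (forall n, 0 <= u n) -> (forall n, u n.+1 <= u n) -> (forall n, 0 <= g n) ->
  (\sum_(0 <= m <oo) ((u m + \sum_(t < m) (u t - u t.+1) * g (m - t)%N)%:E) =
   \sum_(0 <= m <oo) (u m)%:E + \sum_(0 <= j <oo) (g j.+1)%:E)%E.
Proof. exact: conv_series. Qed.

Lemma access2_shift (T : finType) (e : rel T) (R : realType) a b k : a != k ->
  access2 e R a b k = (1 + \sum_(0 <= j <oo) (tail2 e R a b k j.+1)%:E)%E.
Proof.
move=> ak; rewrite /access2 nneseries_recl //; last by move=> j _; rewrite lee_fin tail2_ge0.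
have -> : tail2 e R a b k 0 = 1 by rewrite /= ak.
congr (_ + _)%E.
rewrite -(nneseries_addn 1); last by move=> j; rewrite lee_fin tail2_ge0.
by apply: eq_eseriesr => j _; rewrite addn1.
Qed.

Section Tree.
Variables (T : finType) (e : rel T) (R : realType) (N : nat) (v : nat -> T).
Hypothesis tree : is_tree e.
Hypothesis edges : forall n, (n < N)%N -> e (v n) (v n.+1).
Hypothesis inj : forall m n, (m <= N)%N -> (n <= N)%N -> v m = v n -> m = n.

Lemma esymT : symmetric e. Proof. by case: tree => [[]]. Qed.

Lemma vneq m n : (m <= N)%N -> (n <= N)%N -> m != n -> v m != v n.
Proof. by move=> mN nN; apply: contra => /eqP /inj -> . Qed.

Variable n : nat.
Hypothesis n1 : (1 <= n)%N.
Hypothesis nN : (n < N)%N.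

Let p := v n.-1.
Let c := v n.
Let k := v n.+1.
Let e' := [rel x y | e x y && (x != c) && (y != c)].
Let C0 := [pred x | (x != c) && connect e' p x].

Lemma pc : p != c. Proof. apply: vneq; lia. Qed.
Lemma ck : c != k. Proof. apply: vneq; lia. Qed.
Lemma pk : p != k. Proof. apply: vneq; lia. Qed.
Lemma epc : e p c.
Proof. by rewrite /p /c -{2}(prednK n1); apply: edges; lia. Qed.
Lemma eck : e c k. Proof. exact: edges. Qed.

Lemma HH2 x : C0 x -> x != c. Proof. by case/andP. Qed.

Lemma HH3 x y : C0 x -> e x y -> y != c -> C0 y.
Proof.
case/andP => xc px exy yc; rewrite /C0 /= yc /=.
by apply: connect_trans px (connect1 _); rewrite /= exy xc yc.
Qed.

Lemma path_nc x q : path e' x q -> all (fun y => y != c) q.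
Proof.
elim: q x => [|y q IH] x //= /andP[/andP[/andP[_ _] yc] pq].
by rewrite yc (IH y).
Qed.

Lemma HH4 x : C0 x -> e x c -> x = p.
Proof.
case/andP => xc /connectP [q pq ->] exc.
apply/eqP; apply: contraT => xp.
move: xp exc; case/shortenP: pq => q' pq' uq' _ xp exc.
case: tree => _ _ acyc.
have := acyc c (p :: q').
have sq : (2 <= size (p :: q'))%N by case: q' {pq' uq'} xp exc => //=; rewrite eqxx.
have ps : path e c (p :: q').
  rewrite /= esymT epc /=; apply: sub_path pq' => a b /=.
  by case/andP => /andP [].
have uq : uniq (c :: p :: q').
  rewrite cons_uniq uq' andbT inE negb_or eq_sym pc /=.
  by apply/negP => /(allP (path_nc pq')); rewrite eqxx.
by move/(_ sq ps uq); rewrite /= exc.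
Qed.

Lemma HH1 x : C0 x -> x != k.
Proof.
move=> Cx; apply/negP => /eqP xk; subst x.
have := HH4 Cx; rewrite esymT eck => /(_ isT) kp.
by move: pk; rewrite kp eqxx.
Qed.

Lemma Cp : C0 p. Proof. by rewrite /C0 /= pc connect0. Qed.

Lemma Cv0 : C0 (v 0).
Proof.
suff H : forall j, (j <= n.-1)%N -> C0 (v (n.-1 - j)).
  by have := H n.-1 (leqnn _); rewrite subnn.
elim => [|j IH] jn; first by rewrite subn0 Cp.
have ij : (n.-1 - j = (n.-1 - j.+1).+1)%N by lia.
apply: (@HH3 (v (n.-1 - j))); first by apply: IH; lia.
  by rewrite ij esymT; apply: edges; lia.
apply: vneq; lia.
Qed.

Lemma nb0 : nbhd e (v 0) != finset.set0.
Proof.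
apply/set0Pn; exists (v 1); rewrite inE; apply: edges; lia.
Qed.

Lemma step :
  access e R (v 0) (v n.+1) =
  (access e R (v 0) (v n) + (access2 e R (v n.-1) (v n) (v n.+1) - 1%:E))%E.
Proof.
rewrite /access.
rewrite (eq_eseriesr (fun m _ => congr1 EFin
   (@region_tail1 T e R esymT p c k C0 HH1 HH2 HH3 HH4 (v 0) m Cv0 nb0))).
rewrite conv_series'; last 4 first.
- by rewrite /= vneq //; lia.
- by move=> j; apply: tail1_ge0 nb0.
- by move=> j; apply: tail1_mono nb0.
- by move=> j; apply: tail2_ge0.
congr (_ + _)%E.
rewrite (@access2_shift T e R _ _ _ pk) [(1 + _)%E]addeC addeK //.
Qed.

End Tree.

Unset Implicit Arguments.
Close Scope ring_scope.

Theorem lemma4 (R : realType) (T : finType) (e : rel T) (N : nat) (v : nat -> T) :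
  is_tree e ->
  (1 <= N)%N ->
  (forall n, (n < N)%N -> e (v n) (v n.+1)) ->
  (forall m n, (m <= N)%N -> (n <= N)%N -> v m = v n -> m = n) ->
  access e R (v 0%N) (v N) =
    (access e R (v 0%N) (v 1%N) +
     \sum_(1 <= n < N) (access2 e R (v n.-1) (v n) (v n.+1) - 1%:E))%E.
Proof.
move=> tree N1 edges inj.
suff key : forall M, (1 <= M)%N -> (M <= N)%N -> access e R (v 0%N) (v M) =
    (access e R (v 0%N) (v 1%N) +
     \sum_(1 <= n < M) (access2 e R (v n.-1) (v n) (v n.+1) - 1%:E))%E.
  exact: key.
elim => [//|M IH] M1 MN.
have [M0|Mpos] := posnP M.
  by subst M; rewrite big_geq // adde0.
rewrite big_nat_recr //= addeA -IH //; last by apply: ltnW.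
exact: (step R tree edges inj Mpos MN).
Qed.
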